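(* Let $a_2^{+1},a_2^{-1},a_4^{+1},a_4^{+5},b_4^{-1},b_4^{-5}$ be non-negative integers and let $q=a_2^{+1}\omega_2^{+1}\oplus a_2^{-1}\omega_2^{-1}\oplus a_4^{+1}\omega_4^{+1}\oplus a_4^{+5}\omega_4^{+5}\oplus b_4^{-1}\omega_4^{-1}\oplus b_4^{-5}\omega_4^{-5}$ (where $a\,\omega$ denotes the orthogonal direct sum of $a$ copies of $\omega$), a finite quadratic form on $\mathscr{D}=(\mathbb{Z}/2)^{a_2^{+1}+a_2^{-1}}\oplus(\mathbb{Z}/4)^{a_4^{+1}+a_4^{+5}+b_4^{-1}+b_4^{-5}}$. Then $q$ is $\mathsf{T}$-symmetric if and only if $a_2^{+1}-a_2^{-1}+a_4^{+1}+a_4^{+5}-b_4^{-1}-b_4^{-5}\equiv 0 \pmod 4.$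
   Context: A finite quadratic form $(\mathscr{D},q)$ is a finite abelian group $\mathscr{D}$ with a map $q:\mathscr{D}\to\mathbb{Q}/\mathbb{Z}$ such that $q(nx)=n^2q(x)$ for all $n\in\mathbb{Z}$, $x\in\mathscr{D}$, and $b(x,y)=q(x+y)-q(x)-q(y)$ is a non-degenerate symmetric bilinear form. It is $\mathsf{T}$-symmetric if there is a group automorphism $\gamma$ of $\mathscr{D}$ with $q\circ\gamma=-q$. The forms used are: $\omega_2^{\pm1}$ on $\mathbb{Z}/2$ with $q(x)=\pm x^2/4$; $\omega_4^{\pm1}$ on $\mathbb{Z}/4$ with $q(x)=\pm x^2/8$; $\omega_4^{\pm5}$ on $\mathbb{Z}/4$ with $q(x)=\pm 5x^2/8$. *)

(* Defs.v *)
From HB Require Import structures.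
From mathcomp Require Import all_boot all_order all_algebra.
Set Implicit Arguments. Unset Strict Implicit. Unset Printing Implicit Defensive.
Import Order.TTheory GRing.Theory Num.Theory.
Local Open Scope ring_scope.

(* Q/Z-valued forms are represented by rational-valued functions, compared
   modulo Z: r = s in Q/Z  iff  r - s is an integer. *)
Definition eqQZ (r s : rat) : bool := (r - s) \is a Num.int.

Definition T_symmetric (G : zmodType) (q : G -> rat) : Prop :=
  exists gamma : G -> G,
    [/\ (forall x y, gamma (x + y) = gamma x + gamma y),
        bijective gamma &
        forall x, eqQZ (q (gamma x)) (- q x)].

Definition Dgrp (m n : nat) : zmodType :=
  ({ffun 'I_m -> 'Z_2} * {ffun 'I_n -> 'Z_4})%type.

(* coefficient of the i-th Z/2 summand: first a2p copies of omega_2^{+1},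
   then copies of omega_2^{-1}:  q(x) = coef * x^2 / 4 *)
Definition coef2 (a2p i : nat) : rat := if (i < a2p)%N then 1 else -1.

(* coefficient of the j-th Z/4 summand: a4p copies of omega_4^{+1},
   a4p5 copies of omega_4^{+5}, b4m copies of omega_4^{-1}, then copies of
   omega_4^{-5}:  q(x) = coef * x^2 / 8 *)
Definition coef4 (a4p a4p5 b4m j : nat) : rat :=
  if (j < a4p)%N then 1
  else if (j < a4p + a4p5)%N then 5
  else if (j < a4p + a4p5 + b4m)%N then -1
  else -5.

Definition qform (a2p a2m a4p a4p5 b4m b4m5 : nat)
  (x : Dgrp (a2p + a2m) (a4p + a4p5 + b4m + b4m5)) : rat :=
  \sum_(i < a2p + a2m) coef2 a2p i * ((x.1 i : nat)%:R ^+ 2) / 4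
  + \sum_(j < a4p + a4p5 + b4m + b4m5)
      coef4 a4p a4p5 b4m j * ((x.2 j : nat)%:R ^+ 2) / 8.

(* Main.v *)
Require Import Defs.
From HB Require Import structures.
From mathcomp Require Import all_boot all_order all_algebra.
From mathcomp Require Import algC cyclotomic zify ring.
Import Order.TTheory GRing.Theory Num.Theory.
Local Open Scope ring_scope.
Unset Printing Implicit Defensive.

Set Implicit Arguments. Unset Strict Implicit.

Lemma eqQZ_refl r : eqQZ r r.
Proof. by rewrite /eqQZ subrr int_num0. Qed.
Lemma eqQZ_sym r s : eqQZ r s -> eqQZ s r.
Proof. by rewrite /eqQZ => h; rewrite -opprB rpredN. Qed.
Lemma eqQZ_trans r s t : eqQZ r s -> eqQZ s t -> eqQZ r t.
Proof. by rewrite /eqQZ => h1 h2; rewrite -(subrKA s) rpredD. Qed.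
Lemma eqQZ_add a b c d : eqQZ a b -> eqQZ c d -> eqQZ (a + c) (b + d).
Proof. by rewrite /eqQZ => h1 h2; rewrite opprD addrACA rpredD. Qed.
Lemma eqQZ_opp a b : eqQZ a b -> eqQZ (- a) (- b).
Proof. by rewrite /eqQZ => h; rewrite -opprD rpredN. Qed.
Lemma eqQZ_eq a b : a = b -> eqQZ a b.
Proof. by move=> ->; apply: eqQZ_refl. Qed.

Record fm := Form { car : zmodType; qf : car -> rat }.
Arguments qf : clear implicits.
Definition addm (A B : zmodType) (f : A -> B) := forall x y, f (x + y) = f x + f y.
Definition iso (F G : fm) : Prop :=
  exists f : car F -> car G,
    [/\ addm f, bijective f & forall x, eqQZ (qf G (f x)) (qf F x)].

Lemma iso_refl F : iso F F.
Proof. exists id; split => //; [by exists id | move=> x; exact: eqQZ_refl]. Qed.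

Lemma iso_sym F G : iso F G -> iso G F.
Proof.
case=> f [fa [g fg gf] fq]; exists g; split.
- move=> x y; apply: (can_inj fg); by rewrite fa !gf.
- by exists f.
- by move=> y; apply: eqQZ_sym; rewrite -{1}(gf y) fq.
Qed.

Lemma iso_trans F G H : iso F G -> iso G H -> iso F H.
Proof.
case=> f [fa fb fq] [g [ga gb gq]]; exists (g \o f); split.
- by move=> x y /=; rewrite fa ga.
- exact: bij_comp.
- by move=> x /=; apply: eqQZ_trans (gq _) (fq _).
Qed.

Lemma iso_eq (T : zmodType) (q1 q2 : T -> rat) :
  (forall x, eqQZ (q2 x) (q1 x)) -> iso (Form q1) (Form q2).
Proof. by move=> h; exists id; split => //; by exists id. Qed.

Definition osum (F G : fm) : fm :=
  @Form (car F * car G)%type (fun x => qf F x.1 + qf G x.2).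
Definition neg (F : fm) : fm := @Form (car F) (fun x => - qf F x).

Lemma bij_pair (A B C D : Type) (f : A -> C) (g : B -> D) :
  bijective f -> bijective g -> bijective (fun x : A * B => (f x.1, g x.2)).
Proof.
case=> f' h1 h2 [g' h3 h4]; exists (fun y => (f' y.1, g' y.2)).
- by case=> a b /=; rewrite h1 h3.
- by case=> a b /=; rewrite h2 h4.
Qed.

Lemma osum_congr F F' G G' : iso F F' -> iso G G' -> iso (osum F G) (osum F' G').
Proof.
case=> f [fa fb fq] [g [ga gb gq]].
exists (fun x : car F * car G => (f x.1, g x.2)); split.
- by case=> a b [c d] /=; rewrite fa ga.
- exact: bij_pair.
- by case=> a b /=; apply: eqQZ_add.
Qed.

Lemma osum_comm F G : iso (osum F G) (osum G F).
Proof.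
exists (fun x : car F * car G => (x.2, x.1)); split.
- by case=> a b [c d].
- by exists (fun x : car G * car F => (x.2, x.1)); case.
- by case=> a b /=; apply: eqQZ_eq; rewrite addrC.
Qed.

Lemma osum_assoc F G H : iso (osum F (osum G H)) (osum (osum F G) H).
Proof.
exists (fun x : car F * (car G * car H) => ((x.1, x.2.1), x.2.2)); split.
- by case=> a [b c] [d [e f]].
- by exists (fun x : (car F * car G) * car H => (x.1.1, (x.1.2, x.2))); [case=> a [b c] | case=> [[a b] c]].
- by case=> a [b c] /=; apply: eqQZ_eq; rewrite addrA.
Qed.

Lemma neg_congr F G : iso F G -> iso (neg F) (neg G).
Proof. case=> f [fa fb fq]; exists f; split => // x /=; exact: eqQZ_opp. Qed.

Lemma neg_osum F G : iso (neg (osum F G)) (osum (neg F) (neg G)).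
Proof.
exists id; split => //; first by exists id.
by move=> x /=; apply: eqQZ_eq; rewrite opprD.
Qed.

Lemma Tsym_of_iso (G : zmodType) (q : G -> rat) :
  iso (Form q) (neg (Form q)) -> T_symmetric q.
Proof.
case=> f [fa fb fq]; exists f; split => // x.
by have := eqQZ_opp (fq x); rewrite /= opprK.
Qed.

Unset Implicit Arguments. Set Strict Implicit.

Definition atom := (bool * nat)%type.
Definition A2 (e : nat) : fm := @Form 'Z_2 (fun x => ((2 * e * x * x)%N)%:R / 8).
Definition A4 (c : nat) : fm := @Form 'Z_4 (fun x => ((c * x * x)%N)%:R / 8).
Definition atomF (a : atom) : fm := if a.1 then A4 a.2 else A2 a.2.
Definition U : fm := @Form {ffun 'I_0 -> 'Z_2} (fun _ => 0).
Fixpoint L (l : seq atom) : fm := if l is a :: l' then osum (atomF a) (L l') else U.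

Definition natA (a : atom) : car (atomF a) -> nat :=
  match a as a return car (atomF a) -> nat with
  | (true, c) => fun x : 'Z_4 => nat_of_ord x
  | (false, c) => fun x : 'Z_2 => nat_of_ord x end.
Arguments natA : clear implicits.
Definition ofNat (a : atom) : nat -> car (atomF a) :=
  match a as a return nat -> car (atomF a) with
  | (true, c) => fun n => (inZp n : 'Z_4)
  | (false, c) => fun n => (inZp n : 'Z_2) end.
Fixpoint toN (l : seq atom) : car (L l) -> seq nat :=
  match l as l return car (L l) -> seq nat with
  | [::] => fun _ => [::]
  | a :: l' => fun x => natA a x.1 :: toN l' x.2 end.
Arguments toN : clear implicits.
Fixpoint fromN (l : seq atom) : seq nat -> car (L l) :=
  match l as l return seq nat -> car (L l) with
  | [::] => fun _ => 0
  | a :: l' => fun s => (ofNat a (head 0%N s), fromN l' (behead s)) end.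

Definition md (a : atom) : nat := if a.1 then 4 else 2.
Fixpoint vadd (ms s t : seq nat) : seq nat :=
  match ms, s, t with
  | m :: ms', x :: s', y :: t' => ((x + y) %% m)%N :: vadd ms' s' t'
  | _, _, _ => [::] end.
Fixpoint allv (ms : seq nat) : seq (seq nat) :=
  if ms is m :: ms' then [seq x :: v | x <- iota 0 m, v <- allv ms'] else [:: [::]].
Definition coefN (a : atom) (n : nat) : nat :=
  if a.1 then (a.2 * n * n)%N else (2 * a.2 * n * n)%N.
Fixpoint nval (l : seq atom) (s : seq nat) : nat :=
  match l, s with
  | a :: l', n :: s' => (coefN a n + nval l' s')%N
  | _, _ => 0%N end.

Lemma allv_cons m ms x v : (x :: v \in allv (m :: ms)) = (x < m)%N && (v \in allv ms).
Proof.
apply/allpairsP/andP => [[[y w]] /= [hy hw [-> ->]]|[hx hv]].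
  by rewrite mem_iota in hy.
by exists (x, v); rewrite mem_iota.
Qed.

Lemma allv_nil m ms : ([::] \in allv (m :: ms)) = false.
Proof. by apply/allpairsP => -[[y w]] []. Qed.

Lemma natA_lt a x : (natA a x < md a)%N.
Proof. by case: a x => [[]] c x /=; exact: ltn_ord. Qed.

Lemma toN_in l x : toN l x \in allv (map md l).
Proof.
elim: l x => [|a l IH] x /=; first by rewrite inE.
by rewrite allv_cons natA_lt IH.
Qed.

Lemma natA_ofNat a n : (n < md a)%N -> natA a (ofNat a n) = n.
Proof. by case: a => [[]] c /= h; rewrite modn_small. Qed.

Lemma ofNat_natA a x : ofNat a (natA a x) = x.
Proof. by case: a x => [[]] c x /=; apply: val_inj; rewrite /= modn_small. Qed.

Lemma toN_fromN l s : s \in allv (map md l) -> toN l (fromN l s) = s.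
Proof.
elim: l s => [|a l IH] s /=; first by rewrite inE => /eqP.
case: s => [|n s]; first by rewrite allv_nil.
by rewrite allv_cons => /andP[h1 h2]; rewrite natA_ofNat // IH.
Qed.

Lemma U_eq (x y : {ffun 'I_0 -> 'Z_2}) : x = y.
Proof. by apply/ffunP => -[]. Qed.

Lemma fromN_toN l x : fromN l (toN l x) = x.
Proof.
elim: l x => [|a l IH] x /=; first exact: U_eq.
by case: x => x1 x2 /=; rewrite ofNat_natA IH.
Qed.

Lemma toN_inj l : injective (toN l).
Proof. by move=> x y h; rewrite -(fromN_toN l x) h fromN_toN. Qed.

Lemma toN_add l x y : toN l (x + y) = vadd (map md l) (toN l x) (toN l y).
Proof.
elim: l x y => [|a l IH] // [x1 x2] [y1 y2] /=.
by rewrite -IH; case: a x1 y1 => [[]] c x1 y1.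
Qed.

Lemma qf_L l x : qf (L l) x = (nval l (toN l x))%:R / 8.
Proof.
elim: l x => [|a l IH] x; first by rewrite /= mul0r.
case: x => x1 x2 /=.
by rewrite IH natrD mulrDl; case: a x1 => [[]] c x1.
Qed.

Lemma eqQZ_mod8 (n1 n2 : nat) : (n1 %% 8 = n2 %% 8)%N ->
  eqQZ (n1%:R / 8) (n2%:R / 8).
Proof.
move=> h; rewrite /eqQZ (divn_eq n1 8) (divn_eq n2 8) h !natrD !natrM.
rewrite !mulrDl opprD addrACA subrr addr0 -!mulrA divff ?mulr1 //.
by rewrite rpredB // natr_int.
Qed.

Definition rowv (row s : seq nat) : nat :=
  sumn (map (fun p : nat * nat => p.1 * p.2)%N (zip row s)).
Definition mapM (ms : seq nat) (M : seq (seq nat)) (s : seq nat) : seq nat :=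
  map (fun rm : seq nat * nat => (rowv rm.1 s %% rm.2)%N) (zip M ms).
Definition inr (ms s : seq nat) : bool :=
  (size s == size ms) && all2 (fun x m => x < m)%N s ms.

Lemma mem_allv ms s : (s \in allv ms) = inr ms s.
Proof.
elim: ms s => [|m ms IH] [|x s]; rewrite ?allv_nil ?allv_cons ?IH //=.
by rewrite /inr /= eqSS andbCA.
Qed.

Lemma rowv_vadd m row ms s t :
  size row = size ms -> size s = size ms -> size t = size ms ->
  all2 (fun a mj => m %| a * mj)%N row ms ->
  (rowv row (vadd ms s t) %% m = (rowv row s + rowv row t) %% m)%N.
Proof.
elim: ms row s t => [|mj ms IH] [|a row] [|x s] [|y t] //= [hr] [hs] [ht] /andP[hd hall].
rewrite /rowv /= -/(rowv row (vadd ms s t)) -/(rowv row s) -/(rowv row t).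
rewrite -modnDm IH // modnDm.
have e : (a * (x + y) = a * ((x + y) %% mj) + a * mj * ((x + y) %/ mj))%N.
  by rewrite {1}(divn_eq (x + y) mj) mulnDr addnC mulnA [(a * _ * mj)%N]mulnAC.
have e2 : (a * ((x + y) %% mj) %% m = a * (x + y) %% m)%N.
  case/dvdnP: hd => k hk; rewrite e hk mulnAC.
  by rewrite -[in RHS]modnDm modnMl addn0 modn_mod.
rewrite -modnDml e2 modnDml.
rewrite mulnDr; congr (_ %% m)%N; lia.
Qed.

Lemma mapM_add_gen ms ms' M s t :
  size M = size ms' -> all (fun row => size row == size ms) M ->
  all2 (fun row mi => all2 (fun a mj => mi %| a * mj)%N row ms) M ms' ->
  size s = size ms -> size t = size ms ->
  map (fun rm : seq nat * nat => (rowv rm.1 (vadd ms s t) %% rm.2)%N) (zip M ms') =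
  vadd ms' (map (fun rm : seq nat * nat => (rowv rm.1 s %% rm.2)%N) (zip M ms'))
           (map (fun rm : seq nat * nat => (rowv rm.1 t %% rm.2)%N) (zip M ms')).
Proof.
elim: M ms' => [|row M IH] [|mi ms'] //= [hM] /andP[/eqP hr hrs] /andP[hd hds] hs ht.
by rewrite IH // modnDm rowv_vadd.
Qed.

Lemma mapM_add ms M s t :
  size M = size ms -> all (fun row => size row == size ms) M ->
  all2 (fun row mi => all2 (fun a mj => mi %| a * mj)%N row ms) M ms ->
  size s = size ms -> size t = size ms ->
  mapM ms M (vadd ms s t) = vadd ms (mapM ms M s) (mapM ms M t).
Proof. exact: mapM_add_gen. Qed.

Definition ok2 (l l' : seq atom) (M Mi : seq (seq nat)) : bool :=
  let ms := map md l in
  let F := mapM ms M in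
  let G := mapM ms Mi in
  [&& ms == map md l', size M == size ms,
      all (fun row => size row == size ms) M,
      all2 (fun row mi => all2 (fun a mj => mi %| a * mj)%N row ms) M ms,
      all (fun s => [&& inr ms (F s), G (F s) == s &
                        (nval l' (F s) %% 8 == nval l s %% 8)%N]) (allv ms) &
      all (fun t => inr ms (G t) && (F (G t) == t)) (allv ms)].

Lemma size_toN l x : size (toN l x) = size (map md l).
Proof. by have := toN_in l x; rewrite mem_allv => /andP[/eqP]. Qed.

Lemma check_iso l l' M Mi : ok2 l l' M Mi -> iso (L l) (L l').
Proof.
case/and5P => /eqP hm /eqP hsM hrows hdiv /andP[/allP h1 /allP h2].
pose F := mapM (map md l) M; pose G := mapM (map md l) Mi.
pose f x := fromN l' (F (toN l x)).
pose g y := fromN l (G (toN l' y)).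
have hF x : F (toN l x) \in allv (map md l).
  by rewrite mem_allv; case/and3P: (h1 _ (toN_in l x)).
have tf x : toN l' (f x) = F (toN l x) by rewrite /f toN_fromN // -hm.
exists f; split.
- move=> x y; apply: (toN_inj l').
  rewrite toN_add !tf toN_add -hm /F mapM_add //; exact: size_toN.
- exists g => [x|y].
    rewrite /g tf.
    case/and3P: (h1 _ (toN_in l x)) => _ /eqP hGF _.
    by rewrite -/F -/G in hGF; rewrite hGF fromN_toN.
  have hy : toN l' y \in allv (map md l) by rewrite hm toN_in.
  case/andP: (h2 _ hy) => hG /eqP hFG; rewrite -/F -/G in hG hFG.
  by rewrite /f /g toN_fromN ?mem_allv // hFG fromN_toN.
- move=> x; rewrite !qf_L tf; apply: eqQZ_mod8.
  by case/and3P: (h1 _ (toN_in l x)) => _ _ /eqP.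
Qed.

Lemma iso_unitl F : iso F (osum U F).
Proof.
exists (fun x => (0, x)); split.
- by move=> x y; rewrite -[X in (X, _)](addr0 0).
- exists (fun p : car U * car F => p.2) => // -[u x] /=.
  by congr (_, _); apply: U_eq.
- by move=> x /=; apply: eqQZ_eq; rewrite add0r.
Qed.

Lemma Lcat l1 l2 : iso (L (l1 ++ l2)) (osum (L l1) (L l2)).
Proof.
elim: l1 => [|a l1 IH] /=; first exact: iso_unitl.
apply: iso_trans (osum_assoc _ _ _).
by apply: osum_congr => //; exact: iso_refl.
Qed.

Lemma swap2 X Y R : iso (osum X (osum Y R)) (osum Y (osum X R)).
Proof.
apply: iso_trans (osum_assoc _ _ _) _.
apply: iso_trans (iso_sym (osum_assoc _ _ _)).
by apply: osum_congr; [exact: osum_comm | exact: iso_refl].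
Qed.

Lemma Lmove l1 x l2 : iso (L (l1 ++ x :: l2)) (L (x :: l1 ++ l2)).
Proof.
elim: l1 => [|y l1 IH] /=; first exact: iso_refl.
apply: iso_trans (swap2 _ _ _).
by apply: osum_congr => //; exact: iso_refl.
Qed.

Lemma Lperm l l' : perm_eq l l' -> iso (L l) (L l').
Proof.
elim: l l' => [|x l IH] l' hp.
  by move: hp; rewrite perm_sym => /perm_nilP ->; exact: iso_refl.
have hx : x \in l' by rewrite -(perm_mem hp) mem_head.
move: hp; case/splitPr: hx => l1 l2 hp.
apply: iso_trans (iso_sym (Lmove _ _ _)) => /=.
apply: osum_congr; first exact: iso_refl.
apply: IH; rewrite -(perm_cons x); apply: perm_trans hp _.
by rewrite -cat1s perm_catCA perm_refl.
Qed.

Definition CL (a d b c e f : nat) : seq atom :=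
  nseq a (false, 1%N) ++ nseq d (false, 3%N) ++ nseq b (true, 1%N) ++
  nseq c (true, 5%N) ++ nseq e (true, 7%N) ++ nseq f (true, 3%N).
Definition CLv (v : seq nat) :=
  CL (nth 0%N v 0) (nth 0%N v 1) (nth 0%N v 2) (nth 0%N v 3) (nth 0%N v 4) (nth 0%N v 5).
Definition swapv (v : seq nat) : seq nat :=
  [:: nth 0%N v 1; nth 0%N v 0; nth 0%N v 4; nth 0%N v 5; nth 0%N v 2; nth 0%N v 3].
Definition OK (v : seq nat) := iso (L (CLv v)) (L (CLv (swapv v))).
Definition vadd6 (v w : seq nat) := mkseq (fun i => nth 0%N v i + nth 0%N w i)%N 6.
Definition vsub6 (v w : seq nat) := mkseq (fun i => nth 0%N v i - nth 0%N w i)%N 6.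
Definition vcap6 (v : seq nat) := mkseq (fun i => minn 4 (nth 0%N v i)) 6.
Definition leqv (w v : seq nat) := all (fun i => nth 0%N w i <= nth 0%N v i)%N (iota 0 6).
Definition plv (v : seq nat) := (nth 0%N v 0 + nth 0%N v 2 + nth 0%N v 3)%N.
Definition miv (v : seq nat) := (nth 0%N v 1 + nth 0%N v 4 + nth 0%N v 5)%N.
Definition phiv (v : seq nat) :=
  (nth 0%N v 0 + 7 * nth 0%N v 1 + nth 0%N v 2 + 5 * nth 0%N v 3 + 7 * nth 0%N v 4 + 3 * nth 0%N v 5)%N.

Lemma CLv_add v w : perm_eq (CLv (vadd6 v w)) (CLv v ++ CLv w).
Proof.
apply/permP => p; rewrite /CLv /vadd6 /CL /= !count_cat !count_nseq.
rewrite !mulnDr; lia.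
Qed.

Lemma OK_add v w : OK v -> OK w -> OK (vadd6 v w).
Proof.
move=> hv hw; rewrite /OK.
apply: iso_trans (Lperm _ _ (CLv_add v w)) _.
apply: iso_trans (Lcat _ _) _.
have -> : CLv (swapv (vadd6 v w)) = CLv (vadd6 (swapv v) (swapv w)) by [].
apply: iso_trans (iso_sym (Lperm _ _ (CLv_add _ _))).
apply: iso_trans (iso_sym (Lcat _ _)).
exact: osum_congr.
Qed.

Lemma OK_ext v v' : (forall i, i < 6 -> nth 0 v i = nth 0 v' i)%N -> OK v -> OK v'.
Proof.
move=> h; rewrite /OK /CLv /swapv /= !h //.
Qed.

Lemma OK_swap v : OK v -> OK (swapv v).
Proof. by move=> h; apply: iso_sym. Qed.

Definition table : seq (seq nat * (seq (seq nat) * seq (seq nat))) := [::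
  ([:: 1; 1; 0; 0; 0; 0], ([:: [:: 1; 0]; [:: 0; 1]], [:: [:: 1; 0]; [:: 0; 1]]));
  ([:: 1; 0; 0; 0; 1; 0], ([:: [:: 1; 1]; [:: 2; 1]], [:: [:: 1; 1]; [:: 2; 3]]));
  ([:: 1; 0; 0; 0; 0; 1], ([:: [:: 1; 1]; [:: 2; 1]], [:: [:: 1; 1]; [:: 2; 3]]));
  ([:: 0; 1; 1; 0; 0; 0], ([:: [:: 1; 1]; [:: 2; 1]], [:: [:: 1; 1]; [:: 2; 3]]));
  ([:: 0; 0; 1; 0; 1; 0], ([:: [:: 1; 0]; [:: 0; 1]], [:: [:: 1; 0]; [:: 0; 1]]));
  ([:: 0; 0; 1; 0; 0; 1], ([:: [:: 1; 2]; [:: 2; 1]], [:: [:: 1; 2]; [:: 2; 1]]));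
  ([:: 0; 1; 0; 1; 0; 0], ([:: [:: 1; 1]; [:: 2; 1]], [:: [:: 1; 1]; [:: 2; 3]]));
  ([:: 0; 0; 0; 1; 1; 0], ([:: [:: 1; 2]; [:: 2; 1]], [:: [:: 1; 2]; [:: 2; 1]]));
  ([:: 0; 0; 0; 1; 0; 1], ([:: [:: 1; 0]; [:: 0; 1]], [:: [:: 1; 0]; [:: 0; 1]]));
  ([:: 0; 0; 0; 4; 0; 0], ([:: [:: 1; 1; 1; 2]; [:: 1; 2; 3; 1]; [:: 1; 3; 2; 3]; [:: 2; 1; 3; 3]], [:: [:: 3; 3; 3; 2]; [:: 3; 2; 1; 3]; [:: 3; 1; 2; 1]; [:: 2; 3; 1; 1]]));
  ([:: 0; 0; 1; 3; 0; 0], ([:: [:: 0; 1; 1; 1]; [:: 1; 0; 1; 3]; [:: 1; 1; 3; 0]; [:: 1; 3; 0; 1]], [:: [:: 0; 3; 3; 3]; [:: 3; 0; 3; 1]; [:: 3; 3; 1; 0]; [:: 3; 1; 0; 3]]));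
  ([:: 0; 0; 2; 2; 0; 0], ([:: [:: 1; 1; 0; 1]; [:: 1; 2; 1; 1]; [:: 0; 1; 3; 3]; [:: 1; 1; 3; 2]], [:: [:: 3; 3; 0; 3]; [:: 3; 2; 3; 3]; [:: 0; 3; 1; 1]; [:: 3; 3; 1; 2]]));
  ([:: 0; 0; 3; 1; 0; 0], ([:: [:: 0; 1; 1; 1]; [:: 1; 0; 1; 3]; [:: 1; 1; 1; 2]; [:: 1; 3; 2; 3]], [:: [:: 0; 3; 3; 3]; [:: 3; 0; 3; 1]; [:: 3; 3; 3; 2]; [:: 3; 1; 2; 1]]));
  ([:: 0; 0; 4; 0; 0; 0], ([:: [:: 1; 1; 1; 2]; [:: 1; 2; 3; 1]; [:: 1; 3; 2; 3]; [:: 2; 1; 3; 3]], [:: [:: 3; 3; 3; 2]; [:: 3; 2; 1; 3]; [:: 3; 1; 2; 1]; [:: 2; 3; 1; 1]]));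
  ([:: 1; 0; 0; 3; 0; 0], ([:: [:: 1; 1; 1; 1]; [:: 2; 0; 1; 2]; [:: 2; 1; 2; 0]; [:: 2; 2; 0; 1]], [:: [:: 1; 1; 1; 1]; [:: 2; 0; 3; 2]; [:: 2; 3; 2; 0]; [:: 2; 2; 0; 3]]));
  ([:: 1; 0; 1; 2; 0; 0], ([:: [:: 1; 1; 1; 1]; [:: 2; 0; 0; 1]; [:: 2; 0; 1; 2]; [:: 2; 1; 2; 2]], [:: [:: 1; 1; 1; 1]; [:: 2; 0; 0; 3]; [:: 2; 0; 3; 2]; [:: 2; 3; 2; 2]]));
  ([:: 1; 0; 2; 1; 0; 0], ([:: [:: 1; 1; 1; 1]; [:: 2; 0; 0; 1]; [:: 2; 0; 1; 2]; [:: 2; 1; 2; 2]], [:: [:: 1; 1; 1; 1]; [:: 2; 0; 0; 3]; [:: 2; 0; 3; 2]; [:: 2; 3; 2; 2]]));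
  ([:: 1; 0; 3; 0; 0; 0], ([:: [:: 1; 1; 1; 1]; [:: 2; 0; 1; 2]; [:: 2; 1; 2; 0]; [:: 2; 2; 0; 1]], [:: [:: 1; 1; 1; 1]; [:: 2; 0; 3; 2]; [:: 2; 3; 2; 0]; [:: 2; 2; 0; 3]]));
  ([:: 2; 0; 0; 2; 0; 0], ([:: [:: 0; 1; 0; 1]; [:: 1; 0; 1; 0]; [:: 0; 2; 2; 1]; [:: 2; 0; 1; 2]], [:: [:: 0; 1; 0; 1]; [:: 1; 0; 1; 0]; [:: 0; 2; 2; 3]; [:: 2; 0; 3; 2]]));
  ([:: 2; 0; 1; 1; 0; 0], ([:: [:: 0; 1; 0; 1]; [:: 1; 0; 1; 0]; [:: 0; 2; 0; 1]; [:: 2; 0; 1; 0]], [:: [:: 0; 1; 0; 1]; [:: 1; 0; 1; 0]; [:: 0; 2; 0; 3]; [:: 2; 0; 3; 0]]));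
  ([:: 2; 0; 2; 0; 0; 0], ([:: [:: 0; 1; 0; 1]; [:: 1; 0; 1; 0]; [:: 0; 2; 2; 1]; [:: 2; 0; 1; 2]], [:: [:: 0; 1; 0; 1]; [:: 1; 0; 1; 0]; [:: 0; 2; 2; 3]; [:: 2; 0; 3; 2]]));
  ([:: 3; 0; 0; 1; 0; 0], ([:: [:: 0; 0; 1; 1]; [:: 0; 1; 0; 1]; [:: 1; 0; 0; 1]; [:: 2; 2; 2; 1]], [:: [:: 0; 0; 1; 1]; [:: 0; 1; 0; 1]; [:: 1; 0; 0; 1]; [:: 2; 2; 2; 3]]));
  ([:: 3; 0; 1; 0; 0; 0], ([:: [:: 0; 0; 1; 1]; [:: 0; 1; 0; 1]; [:: 1; 0; 0; 1]; [:: 2; 2; 2; 1]], [:: [:: 0; 0; 1; 1]; [:: 0; 1; 0; 1]; [:: 1; 0; 0; 1]; [:: 2; 2; 2; 3]]));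
  ([:: 4; 0; 0; 0; 0; 0], ([:: [:: 0; 1; 1; 1]; [:: 1; 0; 1; 1]; [:: 1; 1; 0; 1]; [:: 1; 1; 1; 0]], [:: [:: 0; 1; 1; 1]; [:: 1; 0; 1; 1]; [:: 1; 1; 0; 1]; [:: 1; 1; 1; 0]]))]%N.
Definition blocks : seq (seq nat) :=
  map fst table ++ [seq swapv e.1 | e <- drop 9 table].

Definition table_ok :=
  all (fun e => ok2 (CLv e.1) (CLv (swapv e.1)) e.2.1 e.2.2) table.

Lemma table_okP : table_ok.
Proof. reflexivity. Qed.


Lemma blocks_OK w : w \in blocks -> OK w.
Proof.
have H e : e \in table -> OK e.1.
  by move=> he; exact: (check_iso _ _ _ _ (allP table_okP e he)).
rewrite mem_cat => /orP[/mapP[e he ->]|/mapP[e /mem_drop he ->]]; first exact: H.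
exact/OK_swap/H.
Qed.

Definition pickcond (u : seq nat) :=
  (0 < plv u + miv u)%N && [|| (0 < plv u) && (0 < miv u),
     (3 < plv u) && (miv u == 0) | (3 < miv u) && (plv u == 0)]%N.

Lemma pick_ok :
  all (fun u => pickcond u ==> has (fun w => leqv w u) blocks) (allv (nseq 6 5%N)).
Proof. vm_compute; reflexivity. Qed.

Lemma blocks_prop :
  all (fun w => (0 < plv w + miv w)%N && (phiv w %% 4 == 0)%N) blocks.
Proof. vm_compute; reflexivity. Qed.

Lemma capv_in v : vcap6 v \in allv (nseq 6 5%N).
Proof.
have -> : vcap6 v = [:: minn 4 (nth 0 v 0); minn 4 (nth 0 v 1); minn 4 (nth 0 v 2);
                      minn 4 (nth 0 v 3); minn 4 (nth 0 v 4); minn 4 (nth 0 v 5)] by [].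
have -> : nseq 6 5%N = [:: 5; 5; 5; 5; 5; 5]%N by [].
by rewrite !allv_cons !ltnS !geq_minl mem_head.
Qed.

Lemma leqvP w v : leqv w v -> forall i, (i < 6)%N -> (nth 0 w i <= nth 0 v i)%N.
Proof. by move/allP=> h i hi; apply: h; rewrite mem_iota. Qed.

Lemma OK_zero v : (plv v + miv v = 0)%N -> OK v.
Proof.
rewrite /plv /miv => h.
have h0 : nth 0%N v 0 = 0%N by lia.
have h1 : nth 0%N v 1 = 0%N by lia.
have h2 : nth 0%N v 2 = 0%N by lia.
have h3 : nth 0%N v 3 = 0%N by lia.
have h4 : nth 0%N v 4 = 0%N by lia.
have h5 : nth 0%N v 5 = 0%N by lia.
by rewrite /OK /CLv /swapv /= h0 h1 h2 h3 h4 h5; exact: iso_refl.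
Qed.

Lemma main_OK n v : (plv v + miv v <= n)%N -> (phiv v %% 4 = 0)%N -> OK v.
Proof.
elim: n v => [|n IH] v hn hphi.
  by apply: OK_zero; lia.
have [hz|hnz] := eqVneq (plv v + miv v)%N 0%N; first exact: OK_zero.
have hpc : pickcond (vcap6 v).
  move: hn hphi hnz; rewrite /pickcond /plv /miv /phiv /vcap6 /= => hn hphi hnz.
  apply/andP; split; first lia.
  apply/or3P.
  have [/andP[ha hb]|] := boolP ((0 < nth 0 v 0 + nth 0 v 2 + nth 0 v 3) &&
                        (0 < nth 0 v 1 + nth 0 v 4 + nth 0 v 5))%N.
    by apply: Or31; apply/andP; split; lia.
  rewrite negb_and -!leqNgt !leqn0 => /orP[/eqP hp|/eqP hm].
    by apply: Or33; apply/andP; split; [lia|apply/eqP; lia].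
  by apply: Or32; apply/andP; split; [lia|apply/eqP; lia].
have /hasP[w hw hle] := implyP (allP pick_ok _ (capv_in v)) hpc.
have hle' : forall i, (i < 6)%N -> (nth 0 w i <= nth 0 v i)%N.
  move=> i hi; apply: leq_trans (leqvP _ _ hle i hi) _.
  by rewrite /vcap6 nth_mkseq // geq_minr.
case/andP: (allP blocks_prop _ hw) => hw1 /eqP hw2.
have hv' : OK (vsub6 v w).
  apply: IH.
    move: hn hw1 (hle' 0%N isT) (hle' 1%N isT) (hle' 2%N isT) (hle' 3%N isT)
      (hle' 4%N isT) (hle' 5%N isT); rewrite /plv /miv /vsub6 /=; lia.
  move: hphi hw2 (hle' 0%N isT) (hle' 1%N isT) (hle' 2%N isT) (hle' 3%N isT)
      (hle' 4%N isT) (hle' 5%N isT); rewrite /phiv /vsub6 /=; lia.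
apply: (OK_ext _ _ _ (OK_add _ _ hv' (blocks_OK _ hw))).
move=> i hi; rewrite /vadd6 /vsub6 nth_mkseq // nth_mkseq // subnK //.
exact: hle'.
Qed.

Lemma ffunDE (aT : finType) (T : zmodType) (x y : {ffun aT -> T}) i :
  (x + y) i = x i + y i.
Proof. by rewrite /= ffunE. Qed.

Lemma ffun_split (T : zmodType) m (h : nat -> T -> rat) :
  iso (@Form {ffun 'I_m.+1 -> T} (fun x => \sum_(i < m.+1) h i (x i)))
      (osum (@Form T (h 0%N)) (@Form {ffun 'I_m -> T} (fun x => \sum_(i < m) h i.+1 (x i)))).
Proof.
exists (fun x : {ffun 'I_m.+1 -> T} => (x ord0, [ffun i => x (lift ord0 i)])); split.
- move=> x y /=; congr (_, _); first by rewrite ffunDE.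
  by apply/ffunP => i; rewrite !ffunDE !ffunE ?ffunDE.
- exists (fun p : T * {ffun 'I_m -> T} =>
            [ffun i : 'I_m.+1 => if unlift ord0 i is Some j then p.2 j else p.1]).
    move=> x; apply/ffunP => i; rewrite ffunE.
    by case: unliftP => [j ->|->] //=; rewrite ffunE.
  case=> a y /=; congr (_, _); first by rewrite ffunE unlift_none.
  by apply/ffunP => i; rewrite !ffunE liftK.
- move=> x /=; rewrite big_ord_recl; apply: eqQZ_eq; congr (_ + _).
  by apply: eq_bigr => i _; rewrite ffunE lift0.
Qed.

Definition D2 m (f : nat -> nat) : fm :=
  @Form {ffun 'I_m -> 'Z_2} (fun x => \sum_(i < m) ((2 * f i * x i * x i)%N)%:R / 8).
Definition D4 m (f : nat -> nat) : fm :=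
  @Form {ffun 'I_m -> 'Z_4} (fun x => \sum_(i < m) ((f i * x i * x i)%N)%:R / 8).

Lemma mkseqS' (T : Type) (f : nat -> T) n : mkseq f n.+1 = f 0%N :: mkseq (fun i => f i.+1) n.
Proof.
rewrite /mkseq /= -[1%N]addn0 iotaDl -map_comp; congr (_ :: _).
Qed.

Lemma iso_ffun0 (T : zmodType) (q : {ffun 'I_0 -> T} -> rat) :
  (forall x, q x = 0) -> iso (Form q) U.
Proof.
move=> hq; exists (fun _ => 0); split.
- by move=> x y; rewrite addr0.
- exists (fun _ => 0) => x; last exact: U_eq.
  by apply/ffunP => -[].
- by move=> x /=; rewrite hq; exact: eqQZ_refl.
Qed.

Lemma D2_L m f : iso (D2 m f) (L (mkseq (fun i => (false, f i)) m)).
Proof.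
elim: m f => [|m IH] f.
  by apply: iso_ffun0 => x; rewrite big_ord0.
rewrite mkseqS' /=.
apply: iso_trans (ffun_split _ m (fun i (t : 'Z_2) => ((2 * f i * t * t)%N)%:R / 8)) _.
by apply: osum_congr; [exact: iso_refl | exact: IH].
Qed.

Lemma D4_L m f : iso (D4 m f) (L (mkseq (fun i => (true, f i)) m)).
Proof.
elim: m f => [|m IH] f.
  by apply: iso_ffun0 => x; rewrite big_ord0.
rewrite mkseqS' /=.
apply: iso_trans (ffun_split _ m (fun i (t : 'Z_4) => ((f i * t * t)%N)%:R / 8)) _.
by apply: osum_congr; [exact: iso_refl | exact: IH].
Qed.

Definition f2 (a2p : nat) (i : nat) : nat := if (i < a2p)%N then 1%N else 3%N.
Definition f4 (a4p a4p5 b4m : nat) (j : nat) : nat :=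
  if (j < a4p)%N then 1%N else if (j < a4p + a4p5)%N then 5%N
  else if (j < a4p + a4p5 + b4m)%N then 7%N else 3%N.

Lemma eqQZ_sum (I : finType) (F G : I -> rat) :
  (forall i, eqQZ (F i) (G i)) -> eqQZ (\sum_i F i) (\sum_i G i).
Proof.
move=> h; elim/big_rec2: _ => [|i x y _ hxy]; first exact: eqQZ_refl.
exact: eqQZ_add.
Qed.

Lemma eqQZ_int a b (z : rat) : a - b = z -> z \is a Num.int -> eqQZ a b.
Proof. by rewrite /eqQZ => ->. Qed.

Lemma term2 a2p i (t : nat) :
  eqQZ (((2 * f2 a2p i * t * t)%N)%:R / 8) (coef2 a2p i * (t%:R ^+ 2) / 4).
Proof.
rewrite /f2 /coef2; case: ifP => _.
  by apply: eqQZ_eq; rewrite !natrM; field.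
by apply: (@eqQZ_int _ _ (t * t)%N%:R); [rewrite !natrM; field | exact: natr_int].
Qed.

Lemma term4 a4p a4p5 b4m j (t : nat) :
  eqQZ (((f4 a4p a4p5 b4m j * t * t)%N)%:R / 8) (coef4 a4p a4p5 b4m j * (t%:R ^+ 2) / 8).
Proof.
rewrite /f4 /coef4; case: ifP => _.
  by apply: eqQZ_eq; rewrite !natrM; field.
case: ifP => _.
  by apply: eqQZ_eq; rewrite !natrM; field.
case: ifP => _.
  by apply: (@eqQZ_int _ _ (t * t)%N%:R); [rewrite !natrM; field | exact: natr_int].
by apply: (@eqQZ_int _ _ (t * t)%N%:R); [rewrite !natrM; field | exact: natr_int].
Qed.

Lemma qform_D a2p a2m a4p a4p5 b4m b4m5 :
  iso (Form (@qform a2p a2m a4p a4p5 b4m b4m5))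
      (osum (D2 (a2p + a2m) (f2 a2p)) (D4 (a4p + a4p5 + b4m + b4m5) (f4 a4p a4p5 b4m))).
Proof.
apply: iso_eq => x /=; rewrite /qform; apply: eqQZ_add; apply: eqQZ_sum => i.
  exact: term2.
exact: term4.
Qed.

Lemma mkseq_cat (X : Type) (F : nat -> X) a b :
  mkseq F (a + b) = mkseq F a ++ mkseq (fun i => F (a + i)%N) b.
Proof.
rewrite /mkseq iotaD map_cat add0n -{2}[a]addn0 iotaDl -map_comp.
by congr (_ ++ _); apply: eq_map.
Qed.

Lemma mkseq_const (X : Type) (F : nat -> X) a c :
  (forall i, (i < a)%N -> F i = c) -> mkseq F a = nseq a c.
Proof.
move=> h; apply: (@eq_from_nth _ c); first by rewrite size_mkseq size_nseq.
by move=> i; rewrite size_mkseq => hi; rewrite nth_mkseq // nth_nseq hi h.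
Qed.

Lemma list_eq a2p a2m a4p a4p5 b4m b4m5 :
  mkseq (fun i => (false, f2 a2p i)) (a2p + a2m) ++
  mkseq (fun i => (true, f4 a4p a4p5 b4m i)) (a4p + a4p5 + b4m + b4m5) =
  CL a2p a2m a4p a4p5 b4m b4m5.
Proof.
rewrite /CL !mkseq_cat -!catA.
have ltF (x y : nat) : (y <= x)%N -> (x < y)%N = false by move=> h; apply/negbTE; rewrite -leqNgt.
congr (_ ++ _).
  by apply: mkseq_const => i hi; rewrite /f2 hi.
congr (_ ++ _).
  by apply: mkseq_const => i hi; rewrite /f2 ltF //; lia.
congr (_ ++ _).
  by apply: mkseq_const => i hi; rewrite /f4 hi.
congr (_ ++ _).
  by apply: mkseq_const => i hi; rewrite /f4 ltF; [rewrite ifT //; lia | lia].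
congr (_ ++ _).
  by apply: mkseq_const => i hi; rewrite /f4 ltF; [rewrite ltF; [rewrite ifT //; lia|lia] | lia].
by apply: mkseq_const => i hi; rewrite /f4 ltF; [rewrite ltF; [rewrite ltF //; lia|lia] | lia].
Qed.

Definition negA (a : atom) : atom := if a.1 then (true, 8 - a.2)%N else (false, 4 - a.2)%N.
Definition validA (a : atom) : bool := if a.1 then (a.2 <= 8)%N else (a.2 <= 4)%N.

Lemma eqQZ_neg8 (n1 n2 : nat) : ((n1 + n2) %% 8 = 0)%N ->
  eqQZ (n2%:R / 8) (- (n1%:R / 8)).
Proof.
move=> h; apply: (@eqQZ_int _ _ ((n1 + n2) %/ 8)%N%:R); last exact: natr_int.
have := divn_eq (n1 + n2) 8; rewrite h addn0 => e.
apply: (@mulIf _ 8) => //; rewrite -natrM -e natrD; field; done.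
Qed.

Lemma atom_neg a : validA a -> iso (neg (atomF a)) (atomF (negA a)).
Proof.
case: a => -[] c /= hc; apply: iso_eq => x /=; apply: eqQZ_neg8.
  have -> : (c * x * x + (8 - c) * x * x = 8 * (x * x))%N by rewrite -!mulnA -mulnDl subnKC.
  by rewrite modnMr.
have -> : (2 * c * x * x + 2 * (4 - c) * x * x = 8 * (x * x))%N.
  by rewrite -!mulnA -mulnDr -mulnDl subnKC // mulnA.
by rewrite modnMr.
Qed.

Lemma L_neg l : all validA l -> iso (neg (L l)) (L (map negA l)).
Proof.
elim: l => [|a l IH] /=.
  move=> _; apply: iso_eq => x /=; rewrite oppr0; exact: eqQZ_refl.
case/andP=> ha hl; apply: iso_trans (neg_osum _ _) _.
by apply: osum_congr; [exact: atom_neg | exact: IH].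
Qed.

Lemma if_dir (a2p a2m a4p a4p5 b4m b4m5 : nat) :
  ((a2p%:Z - a2m%:Z + a4p%:Z + a4p5%:Z - b4m%:Z - b4m5%:Z) %% 4)%Z = 0 ->
  T_symmetric (@qform a2p a2m a4p a4p5 b4m b4m5).
Proof.
move=> hc; apply: Tsym_of_iso.
set v := [:: a2p; a2m; a4p; a4p5; b4m; b4m5].
have hphi : (phiv v %% 4 = 0)%N by rewrite /phiv /=; lia.
have hOK := main_OK _ v (leqnn _) hphi.
have h1 : iso (Form (@qform a2p a2m a4p a4p5 b4m b4m5)) (L (CLv v)).
  apply: iso_trans (qform_D _ _ _ _ _ _) _.
  rewrite /CLv /= -list_eq.
  apply: iso_trans (iso_sym (Lcat _ _)).
  by apply: osum_congr; [exact: D2_L | exact: D4_L].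
eapply iso_trans; [exact h1|].
apply: iso_trans hOK _.
apply: iso_trans (neg_congr (iso_sym h1)).
apply: iso_trans (iso_sym (L_neg _ _)); last first.
  by rewrite /CLv /CL /= !all_cat !all_nseq /= !orbT.
apply: Lperm; apply/permP => p.
rewrite /CLv /CL /= !map_cat !map_nseq /= !count_cat !count_nseq; lia.
Qed.

Lemma eqQZ_neg8_inv (n1 n2 : nat) : eqQZ (n2%:R / 8) (- (n1%:R / 8)) ->
  ((n1 + n2) %% 8 = 0)%N.
Proof.
rewrite /eqQZ opprK => /intrP [k hk].
have e : ((n1 + n2)%N%:R : rat) = (k * 8)%:~R.
  by rewrite natrD intrM -hk; field.
have : ((n1 + n2)%N%:Z = k * 8)%R.
  by apply: (@intr_inj rat); rewrite -e.
lia.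
Qed.

Definition Nv m n (f g : nat -> nat) (x : {ffun 'I_m -> 'Z_2} * {ffun 'I_n -> 'Z_4}) : nat :=
  (\sum_(i < m) (2 * f i * x.1 i * x.1 i) + \sum_(j < n) (g j * x.2 j * x.2 j))%N.

Lemma qf_D m n f g x : qf (osum (D2 m f) (D4 n g)) x = (Nv m n f g x)%:R / 8.
Proof.
by rewrite /= /Nv natrD !natr_sum mulrDl !mulr_suml.
Qed.

Lemma qform_Dpt a2p a2m a4p a4p5 b4m b4m5 x :
  eqQZ (qf (osum (D2 (a2p + a2m) (f2 a2p)) (D4 (a4p + a4p5 + b4m + b4m5) (f4 a4p a4p5 b4m))) x)
       (@qform a2p a2m a4p a4p5 b4m b4m5 x).
Proof.
rewrite /qform /=; apply: eqQZ_add; apply: eqQZ_sum => i.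
  exact: term2.
exact: term4.
Qed.

Section Gauss.
Variable w : algC.
Hypothesis w4 : w ^+ 4 = -1.

Lemma w8 : w ^+ 8 = 1.
Proof. by rewrite (exprM w 4 2) w4 sqrrN expr1n. Qed.

Lemma sumZ2 k : \sum_(t : 'Z_2) w ^+ (2 * k * t * t)%N = 1 + w ^+ (2 * k).
Proof.
rewrite big_ord_recl big_ord_recl big_ord0 /= addr0 !muln0 expr0; congr (_ + _).
by rewrite !muln1.
Qed.

Lemma sumZ4 k : odd k -> \sum_(t : 'Z_4) w ^+ (k * t * t)%N = 2 * w ^+ k.
Proof.
move=> hk.
rewrite big_ord_recl big_ord_recl big_ord_recl big_ord_recl big_ord0 /=.
rewrite !muln0 expr0 !muln1 addr0.
have -> : (k * 2 * 2 = 4 * k)%N by lia.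
have -> : (k * 3 * 3 = 8 * k + k)%N by lia.
rewrite exprD !exprM w4 w8 expr1n mul1r -signr_odd hk /= expr1.
by ring.
Qed.

Lemma gauss m n f g : (forall j, odd (g j)) ->
  \sum_(x : {ffun 'I_m -> 'Z_2} * {ffun 'I_n -> 'Z_4}) w ^+ Nv m n f g x =
  (\prod_(i < m) (1 + w ^+ (2 * f i))) * (\prod_(j < n) (2 * w ^+ g j)).
Proof.
move=> hg.
have hA : \prod_(i < m) (1 + w ^+ (2 * f i)) =
    \sum_(u : {ffun 'I_m -> 'Z_2}) w ^+ (\sum_(i < m) (2 * f i * u i * u i))%N.
  transitivity (\prod_(i < m) \sum_(t : 'Z_2) w ^+ (2 * f i * t * t)%N).
    by apply: eq_bigr => i _; rewrite sumZ2.
  rewrite bigA_distr_bigA; apply: eq_bigr => u _; by rewrite expr_sum.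
have hB : \prod_(j < n) (2 * w ^+ g j) =
    \sum_(v : {ffun 'I_n -> 'Z_4}) w ^+ (\sum_(j < n) (g j * v j * v j))%N.
  transitivity (\prod_(j < n) \sum_(t : 'Z_4) w ^+ (g j * t * t)%N).
    by apply: eq_bigr => j _; rewrite sumZ4.
  rewrite bigA_distr_bigA; apply: eq_bigr => v _; by rewrite expr_sum.
rewrite hA hB big_distrlr pair_bigA /=.
by apply: eq_bigr => x _; rewrite /Nv exprD.
Qed.
End Gauss.

Lemma prod_f2 (w : algC) a b :
  \prod_(i < a + b) (1 + w ^+ (2 * f2 a i)) = (1 + w ^+ 2) ^+ a * (1 + w ^+ 6) ^+ b.
Proof.
rewrite big_split_ord /=; congr (_ * _).
  rewrite (eq_bigr (fun _ => 1 + w ^+ 2)); last by move=> i _; rewrite /f2 /= ltn_ord.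
  by rewrite prodr_const card_ord.
rewrite (eq_bigr (fun _ => 1 + w ^+ 6)); last by move=> i _; rewrite /f2 /= ltnNge leq_addr.
by rewrite prodr_const card_ord.
Qed.

Lemma ltF (x y : nat) : (y <= x)%N -> (x < y)%N = false.
Proof. by move=> h; apply/negbTE; rewrite -leqNgt. Qed.

Lemma f4_1 a b c j : (j < a)%N -> f4 a b c j = 1%N.
Proof. by move=> h; rewrite /f4 h. Qed.
Lemma f4_5 a b c j : (a <= j)%N -> (j < a + b)%N -> f4 a b c j = 5%N.
Proof. by move=> h1 h2; rewrite /f4 (ltF j a) // h2. Qed.
Lemma f4_7 a b c j : (a + b <= j)%N -> (j < a + b + c)%N -> f4 a b c j = 7%N.
Proof. by move=> h1 h2; rewrite /f4 (ltF j a) ?(ltF j (a + b)) ?h2 //; lia. Qed.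
Lemma f4_3 a b c j : (a + b + c <= j)%N -> f4 a b c j = 3%N.
Proof.
by move=> h1; rewrite /f4 (ltF j a) ?(ltF j (a + b)) ?(ltF j (a + b + c)) //; lia.
Qed.

Lemma sum_f4 a b c d :
  (\sum_(j < a + b + c + d) f4 a b c j = a + 5 * b + 7 * c + 3 * d)%N.
Proof.
rewrite !big_split_ord /=.
have e1 : (\sum_(i < a) f4 a b c i = \sum_(i < a) 1)%N.
  by apply: eq_bigr => i _; rewrite f4_1.
have e2 : (\sum_(i < b) f4 a b c (a + i) = \sum_(i < b) 5)%N.
  by apply: eq_bigr => i _; move: (ltn_ord i) => hi; rewrite f4_5 //; lia.
have e3 : (\sum_(i < c) f4 a b c (a + b + i) = \sum_(i < c) 7)%N.
  by apply: eq_bigr => i _; move: (ltn_ord i) => hi; rewrite f4_7 //; lia.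
have e4 : (\sum_(i < d) f4 a b c (a + b + c + i) = \sum_(i < d) 3)%N.
  by apply: eq_bigr => i _; move: (ltn_ord i) => hi; rewrite f4_3 //; lia.
rewrite e1 e2 e3 e4.
rewrite !sum_nat_const !card_ord; lia.
Qed.

Lemma Gclosed (w : algC) (w4 : w ^+ 4 = -1) a2p a2m a4p a4p5 b4m b4m5 :
  \sum_(x : {ffun 'I_(a2p + a2m) -> 'Z_2} * {ffun 'I_(a4p + a4p5 + b4m + b4m5) -> 'Z_4})
     w ^+ Nv _ _ (f2 a2p) (f4 a4p a4p5 b4m) x =
  (1 + w ^+ 2) ^+ (a2p + a2m) * 2 ^+ (a4p + a4p5 + b4m + b4m5) *
  w ^+ (6 * a2m + (a4p + 5 * a4p5 + 7 * b4m + 3 * b4m5)).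
Proof.
rewrite gauss //; last first.
  by move=> j; rewrite /f4; case: ifP => _ //; case: ifP => _ //; case: ifP.
rewrite prod_f2 big_split /= prodr_const card_ord prodrXr sum_f4.
have -> : 1 + w ^+ 6 = w ^+ 6 * (1 + w ^+ 2).
  by rewrite mulrDr mulr1 -exprD (exprM w 4 2) w4 sqrrN expr1n addrC.
rewrite exprMn -exprM (exprD (1 + w ^+ 2)) (exprD w (6 * a2m)).
move: ((1 + w ^+ 2) ^+ a2p) ((1 + w ^+ 2) ^+ a2m) (w ^+ (6 * a2m))
  (2 ^+ (a4p + a4p5 + b4m + b4m5) : algC) (w ^+ (a4p + 5 * a4p5 + 7 * b4m + 3 * b4m5)).
by move=> *; ring.
Qed.

Lemma only_if_dir a2p a2m a4p a4p5 b4m b4m5 :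
  T_symmetric (@qform a2p a2m a4p a4p5 b4m b4m5) ->
  ((a2p%:Z - a2m%:Z + a4p%:Z + a4p5%:Z - b4m%:Z - b4m5%:Z) %% 4)%Z = 0.
Proof.
case=> g [ga gb gq].
pose N := Nv (a2p + a2m) (a4p + a4p5 + b4m + b4m5) (f2 a2p) (f4 a4p a4p5 b4m).
have hN x : ((N x + N (g x)) %% 8 = 0)%N.
  apply: eqQZ_neg8_inv; rewrite -(qf_D _ _ _ _ x) -(qf_D _ _ _ _ (g x)).
  apply: eqQZ_trans (qform_Dpt _ _ _ _ _ _ (g x)) _.
  apply: eqQZ_trans (gq x) _.
  exact: eqQZ_opp (eqQZ_sym (qform_Dpt _ _ _ _ _ _ x)).
have [z hz] := C_prim_root_exists (isT : (0 < 8)%N).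
have z4 : z ^+ 4 = -1.
  have : (z ^+ 4) ^+ 2 == 1 by rewrite -exprM prim_expr_order.
  rewrite sqrf_eq1 => /orP[h|/eqP //].
  by move: h; rewrite -{1}(expr0 z) (eq_prim_root_expr hz).
have z74 : (z ^+ 7) ^+ 4 = -1.
  by rewrite -exprM -(prim_expr_mod hz); exact: z4.
have hG : \sum_(x : {ffun 'I_(a2p + a2m) -> 'Z_2} * {ffun 'I_(a4p + a4p5 + b4m + b4m5) -> 'Z_4})
             z ^+ N x =
          \sum_(x : {ffun 'I_(a2p + a2m) -> 'Z_2} * {ffun 'I_(a4p + a4p5 + b4m + b4m5) -> 'Z_4})
             (z ^+ 7) ^+ N x.
  rewrite (reindex_inj (bij_inj gb)); apply: eq_bigr => x _.
  rewrite -exprM -(prim_expr_mod hz) -[in RHS](prim_expr_mod hz); congr (_ ^+ _).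
  have := hN x; lia.
rewrite /N !Gclosed // in hG.
have h76 : 1 + (z ^+ 7) ^+ 2 = z ^+ 6 * (1 + z ^+ 2).
  have z8 : z ^+ 8 = 1 := prim_expr_order hz.
  rewrite -exprM (_ : (7 * 2 = 6 + 8)%N) // exprD z8 mulr1.
  by rewrite mulrDr mulr1 -exprD z8 addrC.
rewrite h76 exprMn -!exprM in hG.
set E := (6 * a2m + (a4p + 5 * a4p5 + 7 * b4m + 3 * b4m5))%N in hG.
set A := (a2p + a2m)%N in hG.
set PP := (1 + z ^+ 2) ^+ A in hG.
set TT := (2 ^+ (a4p + a4p5 + b4m + b4m5) : algC) in hG.
have hG' : (PP * TT) * z ^+ E = (PP * TT) * z ^+ (6 * A + 7 * E).
  rewrite hG exprD.
  by move: (z ^+ (6 * A)) (z ^+ (7 * E)) => u v; ring.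
have hP : PP * TT != 0.
  rewrite mulf_neq0 // expf_neq0 //; last by rewrite pnatr_eq0.
  apply/eqP => h0.
  have h2 : z ^+ 2 = -1 by apply/eqP; rewrite -addr_eq0 addrC h0.
  have : z ^+ 4 = 1 by rewrite (exprM z 2 2) h2 sqrrN expr1n.
  by rewrite z4 => /eqP; rewrite -subr_eq0 -opprD oppr_eq0 -mulr2n pnatr_eq0.
have := mulfI hP hG'; move/eqP; rewrite (eq_prim_root_expr hz) => /eqP.
rewrite /E /A; lia.
Qed.


Theorem lemma1 (a2p a2m a4p a4p5 b4m b4m5 : nat) :
  T_symmetric (@qform a2p a2m a4p a4p5 b4m b4m5) <->
  ((a2p%:Z - a2m%:Z + a4p%:Z + a4p5%:Z - b4m%:Z - b4m5%:Z) %% 4)%Z = 0.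
Proof.
split; [exact: only_if_dir | exact: if_dir].
Qed.
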